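(* Let $(S,\circ)$ be a monoid with identity $e$ and group of units $S^{-1}$. Then: (i) if $x\in S$ is indivisible, then $x$ is a building block of $S$, i.e. $x\in B(S)$; (ii) if $G\subseteq S$ is a generating set of $S$, then $(S^{-1}xS^{-1})\cap G\neq\emptyset$ for every $x\in B(S)$.
   Context: The group of units is $S^{-1}=\{x\in S:\exists y\in S,\ xy=yx=e\}$. An element $x\in S$ is indivisible if for every decomposition $x=yz$ with $y,z\in S$, exactly one of $y,z$ lies in $S^{-1}$. An element $x\in S$ is a building block of $S$ if for every decomposition $x=yz$ with $y,z\in S$ one has $y\in xS^{-1}$ or $z\in S^{-1}x$ (or both); $B(S)$ denotes the set of building blocks. $G\subseteq S$ is a generating set if every element of $S$ is a finite product $g_1\circ\cdots\circ g_m$ ($m\ge1$) of elements of $G$. For subsets, $S^{-1}xS^{-1}=\{uxv:u,v\in S^{-1}\}$. *)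

(* Defs.v *)
From Stdlib Require Import List.

Record Monoid := {
  carrier :> Type;
  op : carrier -> carrier -> carrier;
  e : carrier;
  op_assoc : forall x y z, op x (op y z) = op (op x y) z;
  op_e_l : forall x, op e x = x;
  op_e_r : forall x, op x e = x
}.

Section Defs.
Variable S : Monoid.
Local Notation "x * y" := (op S x y).

Definition is_unit (x : S) : Prop := exists y : S, x * y = e S /\ y * x = e S.

Definition indivisible (x : S) : Prop :=
  forall y z : S, x = y * z ->
    (is_unit y /\ ~ is_unit z) \/ (~ is_unit y /\ is_unit z).

Definition building_block (x : S) : Prop :=
  forall y z : S, x = y * z ->
    (exists u, is_unit u /\ y = x * u) \/ (exists u, is_unit u /\ z = u * x).

Definition prod_ne (g : S) (gs : list S) : S := fold_left (fun a b => a * b) gs g.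

Definition generating_set (G : S -> Prop) : Prop :=
  forall s : S, exists (g : S) (gs : list S),
    G g /\ Forall G gs /\ s = prod_ne g gs.
End Defs.

(* Main.v *)
Require Import Defs.
From Stdlib Require Import List.

Lemma unit_mul (S : Monoid) (a b : S) : is_unit S a -> is_unit S b -> is_unit S (op S a b).
Proof.
  intros [a' [H1 H2]] [b' [H3 H4]]. exists (op S b' a'). split.
  - rewrite <- op_assoc, (op_assoc S b b' a'), H3, op_e_l; exact H1.
  - rewrite <- op_assoc, (op_assoc S a' a b), H2, op_e_l; exact H4.
Qed.

Lemma unit_e (S : Monoid) : is_unit S (e S).
Proof. exists (e S). rewrite op_e_l. auto. Qed.

Lemma block_mul_r (S : Monoid) (x u : S) : building_block S x -> is_unit S u ->
  building_block S (op S x u).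
Proof.
  intros Hb [w [Huw Hwu]] y z Hyz.
  assert (Hx : x = op S y (op S z w)).
  { rewrite op_assoc, <- Hyz, <- op_assoc, Huw, op_e_r; reflexivity. }
  destruct (Hb _ _ Hx) as [[a [Ha Hy]] | [a [Ha Hz]]].
  - left. exists (op S w a). split.
    + apply unit_mul; auto. exists u; auto.
    + rewrite Hy, <- op_assoc, (op_assoc S u w a), Huw, op_e_l; reflexivity.
  - right. exists a. split; auto.
    rewrite op_assoc, <- Hz, <- op_assoc, Hwu, op_e_r; reflexivity.
Qed.

Theorem lemma1 (S : Monoid) :
  (forall x : S, indivisible S x -> building_block S x) /\
  (forall G : S -> Prop, generating_set S G ->
     forall x : S, building_block S x ->
       exists u v : S, is_unit S u /\ is_unit S v /\ G (op S (op S u x) v)).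
Proof.
  split.
  - intros x Hi y z Hyz.
    destruct (Hi y z Hyz) as [[[w [H1 H2]] _] | [_ [w [H1 H2]]]].
    + right. exists w. split. { exists y; auto. }
      rewrite Hyz, op_assoc, H2, op_e_l; reflexivity.
    + left. exists w. split. { exists z; auto. }
      rewrite Hyz, <- op_assoc, H1, op_e_r; reflexivity.
  - intros G HG x Hx.
    destruct (HG x) as [g [gs [Hg [Hgs Heq]]]].
    clear HG. revert x Hx Heq.
    induction gs as [|a l IH] using rev_ind; intros x Hx Heq.
    + exists (e S), (e S). repeat split; try apply unit_e.
      rewrite op_e_l, op_e_r. simpl in Heq. rewrite Heq. exact Hg.
    + apply Forall_app in Hgs. destruct Hgs as [Hl Ha].
      inversion Ha; subst.
      unfold prod_ne in Hx. rewrite fold_left_app in Hx. simpl in Hx.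
      destruct (Hx _ _ eq_refl) as [[u [Hu Hp]] | [u [Hu Hz]]].
      * destruct (IH Hl _ (block_mul_r S _ _ Hx Hu) (eq_sym Hp)) as [a' [b' [Ha' [Hb' HG]]]].
        exists a', (op S u b'). repeat split; auto.
        { apply unit_mul; auto. }
        rewrite op_assoc. rewrite (op_assoc S a') in HG. unfold prod_ne; rewrite fold_left_app; exact HG.
      * exists u, (e S). repeat split; auto. apply unit_e.
        rewrite op_e_r. unfold prod_ne. rewrite fold_left_app. simpl.
        rewrite <- Hz. auto.
Qed.
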